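(* Let $R$ be a commutative hyperring with no zero divisors (i.e. $xy=0$ implies $x=0$ or $y=0$). If $I$ is a relational subhyperring of $R$ such that $xy\in I$ for all $x\in R$ and $y\in I$, then $I$ is a hyperideal of $R$.
   Context: A canonical hypergroup is a triple $(H,+,0)$ where $H\neq\emptyset$, $+$ assigns to each $(x,y)\in H\times H$ a subset $x+y\subseteq H$ (for $A,B\subseteq H$ put $A+B:=\bigcup_{a\in A,b\in B}a+b$, $x+A:=\{x\}+A$), and $0\in H$, such that for all $x,y,z\in H$: $(x+y)+z=x+(y+z)$; $x+y=y+x$; there is a unique $-x\in H$ with $0\in x+(-x)$; and $z\in x+y$ implies $y\in z+(-x)$. Write $x-y:=x+(-y)$. A (commutative) hyperring is $(R,+,\cdot,0)$ with $(R,+,0)$ a canonical hypergroup, $(R,\cdot)$ a commutative semigroup with $0x=0$ for all $x$, and $x(y+z)=xy+xz$ for all $x,y,z$ (where $xA:=\{xa:a\in A\}$). A relational subhyperring of $R$ is a multiplicatively closed subset $S\subseteq R$ such that, with the induced operation $x+_Sy:=(x+y)\cap S$, $(S,+_S,\cdot,0)$ is a hyperring. A (traditional) subhyperring is a subset $S$ with $0\in S$ and $x-y\subseteq S$, $xy\in S$ for all $x,y\in S$. A hyperideal of $R$ is a subhyperring $I$ with $xy\in I$ for all $x\in R$, $y\in I$. *)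

(* Defs.v *)
(* Hyperoperations are encoded relationally:
   [add x y z] means z \in x + y.  Sets are predicates [R -> Prop].
   [hyperring_on C add mul zero] says that (C, add, mul, zero) is a
   commutative hyperring, where all quantifiers range over the carrier
   predicate C (so that both R itself, with C := fun _ => True, and a subset
   S with the induced operation are covered by the same definition). *)

Section HyperDefs.
Context {R : Type}.

Definition canonical_hypergroup_on (C : R -> Prop)
  (add : R -> R -> R -> Prop) (zero : R) : Prop :=
  C zero /\
  (forall x y z, C x -> C y -> add x y z -> C z) /\
  (forall x y z w, C x -> C y -> C z ->
     ((exists a, add x y a /\ add a z w) <-> (exists b, add y z b /\ add x b w))) /\
  (forall x y z, C x -> C y -> (add x y z <-> add y x z)) /\
  (forall x, C x -> exists y, (C y /\ add x y zero) /\
                              forall y', C y' -> add x y' zero -> y' = y) /\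
  (forall x y z nx, C x -> C y -> C z -> C nx -> add x nx zero ->
     add x y z -> add z nx y).

Definition hyperring_on (C : R -> Prop)
  (add : R -> R -> R -> Prop) (mul : R -> R -> R) (zero : R) : Prop :=
  canonical_hypergroup_on C add zero /\
  (forall x y, C x -> C y -> C (mul x y)) /\
  (forall x y z, C x -> C y -> C z -> mul (mul x y) z = mul x (mul y z)) /\
  (forall x y, C x -> C y -> mul x y = mul y x) /\
  (forall x, C x -> mul zero x = zero) /\
  (forall x y z w, C x -> C y -> C z ->
     ((exists a, add y z a /\ w = mul x a) <-> add (mul x y) (mul x z) w)).

Definition hyperring (add : R -> R -> R -> Prop) (mul : R -> R -> R) (zero : R) :=
  hyperring_on (fun _ => True) add mul zero.

Definition induced_add (add : R -> R -> R -> Prop) (S : R -> Prop) :=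
  fun x y z => add x y z /\ S z.

Definition relational_subhyperring (add : R -> R -> R -> Prop)
  (mul : R -> R -> R) (zero : R) (S : R -> Prop) : Prop :=
  (forall x y, S x -> S y -> S (mul x y)) /\
  hyperring_on S (induced_add add S) mul zero.

Definition is_neg (add : R -> R -> R -> Prop) (zero : R) (y ny : R) : Prop :=
  add y ny zero.

Definition subhyperring (add : R -> R -> R -> Prop)
  (mul : R -> R -> R) (zero : R) (S : R -> Prop) : Prop :=
  S zero /\
  (forall x y ny z, S x -> S y -> is_neg add zero y ny -> add x ny z -> S z) /\
  (forall x y, S x -> S y -> S (mul x y)).

Definition hyperideal (add : R -> R -> R -> Prop)
  (mul : R -> R -> R) (zero : R) (I : R -> Prop) : Prop :=
  subhyperring add mul zero I /\ (forall x y, I y -> I (mul x y)).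

End HyperDefs.

(* Main.v *)
Require Import Defs.
From Stdlib Require Import Classical.

Theorem lemma2p31 (R : Type) (add : R -> R -> R -> Prop) (mul : R -> R -> R)
  (zero : R) :
  hyperring add mul zero ->
  (forall x y, mul x y = zero -> x = zero \/ y = zero) ->
  forall I : R -> Prop,
    relational_subhyperring add mul zero I ->
    (forall x y, I y -> I (mul x y)) ->
    hyperideal add mul zero I.
Proof.
  intros HR Hnz I [HIm HI] Habs.
  destruct HR as [[_ [_ [_ [Rcom [Rneg Rrev]]]]] [_ [_ [Rmc [R0 Rdis]]]]].
  destruct HI as [[I0 [_ [_ [_ [Ineg _]]]]] [_ [_ [_ [_ Idis]]]]].
  assert (Uniq : forall u a b, add u a zero -> add u b zero -> a = b).
  { intros u a b Ha Hb. destruct (Rneg u Logic.I) as [w [_ Hw]].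
    rewrite (Hw a Logic.I Ha), (Hw b Logic.I Hb). reflexivity. }
  assert (Hneg : forall y ny, I y -> add y ny zero -> I ny).
  { intros y ny Hy Hny. destruct (Ineg y Hy) as [y' [[Hy' [Hadd _]] _]].
    rewrite (Uniq y ny y' Hny Hadd). exact Hy'. }
  split; [split; [exact I0 | split; [| exact HIm]] | exact Habs].
  intros x y ny z Hx Hy Hny Hz. unfold is_neg in Hny.
  assert (Iny : I ny) by exact (Hneg y ny Hy Hny).
  destruct (classic (exists c, I c /\ c <> zero)) as [[c [Ic Hc]] | Hno].
  - assert (Hd : induced_add add I (mul c x) (mul c ny) (mul c z)).
    { split; [| rewrite Rmc by exact Logic.I; apply Habs; exact Ic].
      apply (proj1 (Rdis c x ny (mul c z) Logic.I Logic.I Logic.I)). exists z. split; auto. }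
    destruct (proj2 (Idis c x ny (mul c z) Ic Hx Iny) Hd) as [a [[Ha Ia] Hca]].
    (* cancel c *)
    destruct (Rneg a Logic.I) as [na [[_ Hna] _]].
    assert (H1 : add (mul c a) (mul c na) zero).
    { apply (proj1 (Rdis c a na zero Logic.I Logic.I Logic.I)). exists zero. split; auto.
      rewrite Rmc by exact Logic.I. symmetry. apply R0. exact Logic.I. }
    rewrite <- Hca in H1.
    destruct (proj2 (Rdis c z na zero Logic.I Logic.I Logic.I) H1) as [d [Hd1 Hd2]].
    symmetry in Hd2. destruct (Hnz c d Hd2) as [E | E]; [contradiction | subst d].
    assert (Ez : z = a).
    { apply (Uniq na). apply Rcom; auto. apply Rcom; auto. }
    subst; exact Ia.
  - assert (Zero : forall u, I u -> u = zero).
    { intros u Hu. apply NNPP. intro Hu'. apply Hno. exists u. auto. }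
    rewrite (Zero x Hx), (Zero ny Iny) in Hz. rewrite (Zero ny Iny) in Hny.
    rewrite (Zero y Hy) in Hny.
    assert (Hz0 : add z zero zero) by (apply (Rrev zero zero z zero); auto).
    assert (z = zero).
    { apply (Uniq zero). apply Rcom; auto. exact Hny. }
    subst; exact I0.
Qed.
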